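(* Let $G=G_1\times G_2$ be a finite group, $p$ a prime with $|G_2|_p>1$, and let $\chi$ be a $p$-vanishing character of $G$. Then $\chi=\sum_i\eta_i\sigma_i$, where the $\eta_i$ are pairwise distinct irreducible characters of $G_1$ and the $\sigma_i$ are $p$-vanishing characters of $G_2$. Moreover $\chi_1:=\sum_i l_p(\sigma_i)\eta_i$ is a $p$-vanishing character of $G_1$ and $l_p(\chi_1)=l_p(\chi)$.
   Context: A character of a finite group is $p$-vanishing if it vanishes on every element of order divisible by $p$. For a character $\chi$ of a finite group $H$ with Sylow $p$-subgroup $S$, the $p$-level $l_p(\chi)$ is the maximal $l\ge0$ such that $\chi|_S-l\rho_S^{\rm reg}$ is a character (non-negative integral combination of irreducibles, possibly zero) of $S$, $\rho_S^{\rm reg}$ being the regular character. $|G_2|_p$ is the $p$-part of $|G_2|$. *)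

(* Defs.v *)
From HB Require Import structures.
From mathcomp Require Import all_boot all_order all_algebra all_fingroup all_solvable all_field all_character.
Set Implicit Arguments. Unset Strict Implicit. Unset Printing Implicit Defensive.
Import Order.TTheory GRing.Theory Num.Theory.
Local Open Scope ring_scope.

Definition p_vanishing (gT : finGroupType) (H : {group gT}) (p : nat)
    (phi : 'CF(H)) : Prop :=
  phi \is a character /\ (forall x, x \in H -> (p %| #[x]%g)%N -> phi x = 0).

Definition sylow_of (gT : finGroupType) (p : nat) (H : {group gT}) : {group gT} :=
  odflt [1 gT]%G [pick S in 'Syl_p(H)%g].

(* Any such l satisfies l <= l * |S| <= phi(1), so the maximum may be taken
   over l <= truncn (phi 1). *)
Definition plevel (gT : finGroupType) (p : nat) (H : {group gT})
    (phi : 'CF(H)) : nat :=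
  (\max_(l < (Num.truncn (phi 1%g)).+1
          | (('Res[sylow_of p H] phi - (l%:R) *: cfReg (sylow_of p H))
              \is a character)%R) (l : nat))%N.

(* Main.v *)
Require Import Defs.
From HB Require Import structures.
From mathcomp Require Import all_boot all_order all_algebra all_fingroup all_solvable all_field all_character.
Import Order.TTheory GRing.Theory Num.Theory.
Local Open Scope ring_scope.

Lemma sylow_ofP (gT : finGroupType) (p : nat) (H : {group gT}) :
  p.-Sylow(H)%g (sylow_of p H).
Proof.
rewrite /sylow_of; case: pickP => [P|] /=; first by rewrite inE.
by case: (@Sylow_exists p gT H) => P sP /(_ P); rewrite inE sP.
Qed.

Lemma plevel_pvan (gT : finGroupType) (H : {group gT}) (p : nat) (psi : 'CF(H)) :
  prime p -> p_vanishing p psi ->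
  psi 1%g = (plevel p psi)%:R * (#|H|`_p)%:R.
Proof.
move=> pr_p [Npsi van].
have sylS := @sylow_ofP gT p H.
set S := sylow_of p H in sylS *.
have cardS : #|S| = (#|H|`_p)%N by apply: card_Hall.
have sSH : S \subset H by case/andP: sylS.
have pS : p.-group%g S := pHall_pgroup sylS.
have vanS : forall x, x \in S -> x != 1%g -> psi x = 0.
  move=> x xS nx1; apply: van; first exact: (subsetP sSH).
  have := pdiv_p_elt (mem_p_elt pS xS) nx1 => <-.
  by apply: pdiv_dvd.
have S0 : (0 < #|S|)%N by apply: cardG_gt0.
have S0r : (#|S|%:R : algC) != 0 by rewrite pnatr_eq0 -lt0n.
have cnat : psi 1%g / #|S|%:R \is a Num.nat.
  have := Cnat_cfdot_char_irr 0 (cfRes_char S Npsi).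
  rewrite irr0 cfdotE (bigD1 1%g) //= big1 ?addr0; last first.
    by move=> x /andP[xS nx1]; rewrite cfResE // vanS // mul0r.
  by rewrite cfResE // cfun1E group1 conjC1 mulr1 mulrC.
case/natrP: cnat => n cn.
have psi1 : psi 1%g = n%:R * #|S|%:R by rewrite -cn mulfVK.
have ResE : 'Res[S] psi = n%:R *: cfReg S.
  apply: cfun_inP => x xS; rewrite cfResE // cfunE cfRegE.
  have [->|nx1] := eqVneq x 1%g; first by rewrite psi1 mulr1n.
  by rewrite vanS // mulr0n mulr0.
rewrite -cardS psi1; congr (_ * _); congr (_%:R); symmetry; apply/eqP; rewrite eqn_leq.
apply/andP; split.
  apply/bigmax_leqP => l; rewrite ResE -scalerBl => /char1_ge0.
  rewrite cfunE cfRegE eqxx mulr1n -/S pmulr_lge0 ?ltr0n // subr_ge0 ler_nat.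
  by [].
have nle : (n < (Num.truncn (psi 1%g)).+1)%N.
  rewrite ltnS truncn_ge_nat ?psi1.
    by rewrite -natrM ler_nat leq_pmulr.
  by rewrite -natrM ler0n.
rewrite /plevel -/S; apply: (leq_bigmax_cond (Ordinal nle)) => /=.
by rewrite ResE subrr rpred0.
Qed.

Lemma dvd_order_dprod {gT : finGroupType} {G G1 G2 : {group gT}}
    (G1xG2 : (G1 \x G2)%g = G) {x y : gT} :
  x \in G1 -> y \in G2 -> (#[y]%g %| #[x * y]%g)%N.
Proof.
move=> xG1 yG2; have [_ _ cG tI] := dprodP G1xG2.
have cxy : commute x y.
  exact: commute_sym ((centsP cG) y yG2 x xG1).
set n := #[x * y]%g.
have E : (x ^+ n * y ^+ n = 1)%g by rewrite -expgMn // expg_order.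
have Ey : (y ^+ n = (x ^+ n)^-1)%g by rewrite -[RHS]mulg1 -E mulKg.
rewrite order_dvdn; apply/eqP.
have : (y ^+ n)%g \in (G1 :&: G2)%g.
  by rewrite inE (groupX _ yG2) andbT Ey groupV groupX.
by rewrite tI inE => /eqP.
Qed.

Theorem lemma2p6 (gT : finGroupType) (G G1 G2 : {group gT})
    (G1xG2 : (G1 \x G2)%g = G) (p : nat) (chi : 'CF(G)) :
  prime p -> (1 < #|G2|`_p)%N -> p_vanishing p chi ->
  exists (n : nat) (eta : 'I_n -> 'CF(G1)) (sigma : 'I_n -> 'CF(G2)),
    [/\ injective eta,
        (forall i, eta i \in irr G1),
        (forall i, p_vanishing p (sigma i)),
        chi = \sum_(i < n) cfDprod G1xG2 (eta i) (sigma i)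
      & let chi1 := \sum_(i < n) ((plevel p (sigma i))%:R *: eta i) in
        p_vanishing p chi1 /\ plevel p chi1 = plevel p chi].
Proof.
move=> pr_p _ pvchi; have [Nchi vanchi] := pvchi.
case/char_sum_irrP: Nchi => m Echi.
pose sigma (i : Iirr G1) : 'CF(G2) :=
  \sum_j (m (dprod_Iirr G1xG2 (i, j)))%:R *: 'chi_j.
have Edec : chi = \sum_i cfDprod G1xG2 'chi_i (sigma i).
  rewrite Echi (reindex (dprod_Iirr G1xG2)) /=; last first.
    by exists (inv_dprod_Iirr G1xG2) => k _; rewrite ?dprod_IirrK ?inv_dprod_IirrK.
  rewrite -(pair_big xpredT xpredT (fun i j =>
     (m (dprod_Iirr G1xG2 (i, j)))%:R *: 'chi_(dprod_Iirr G1xG2 (i, j)))) /=.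
  apply: eq_bigr => i _; rewrite /cfDprod /sigma raddf_sum mulr_sumr.
  apply: eq_bigr => j _; rewrite dprod_IirrE /cfDprod.
  by rewrite !scaler_nat raddfMn mulrnAr.
have sigma_char i : sigma i \is a character.
  by apply: rpred_sum => j _; apply: rpredZnat; apply: irr_char.
have sigma_van i : p_vanishing p (sigma i).
  split => // y yG2 pdy.
  pose psi : 'CF(G1) := \sum_k (sigma k y) *: 'chi_k.
  have psi0 : psi = 0.
    apply: cfun_inP => x xG1; rewrite cfunE /psi sum_cfunE.
    have xyG : (x * y)%g \in G.
      by rewrite -(dprodW G1xG2) mem_mulg.
    have V := vanchi _ xyG (dvdn_trans pdy (dvd_order_dprod G1xG2 xG1 yG2)).
    transitivity (chi (x * y)%g); last by rewrite V.
    rewrite Edec sum_cfunE; apply: eq_bigr => k _.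
    by rewrite cfunE cfDprodE // mulrC.
  have := congr1 (fun f => '[f, 'chi_i]) psi0; rewrite /= cfdot0l /psi.
  rewrite cfdot_suml (bigD1 i) //= big1 ?addr0.
    by rewrite cfdotZl cfdot_irr eqxx mulr1.
  by move=> k nki; rewrite cfdotZl cfdot_irr (negPf nki) mulr0.
pose lv i := plevel p (sigma i).
have sig1 i : sigma i 1%g = (lv i)%:R * (#|G2|`_p)%:R.
  exact: plevel_pvan.
pose chi1 : 'CF(G1) := \sum_i ((lv i)%:R *: 'chi_i).
have chiE x : x \in G1 -> chi x = (#|G2|`_p)%:R * chi1 x.
  move=> xG1; rewrite -{1}[x]mulg1 Edec !sum_cfunE mulr_sumr.
  apply: eq_bigr => i _; rewrite cfDprodE // sig1 cfunE.
  by rewrite mulrC [(lv i)%:R * _]mulrC mulrA.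
have P2 : (#|G2|`_p)%:R != 0 :> algC by rewrite pnatr_eq0 -lt0n part_gt0.
have pv1 : p_vanishing p chi1.
  split.
    by apply: rpred_sum => i _; apply: rpredZnat; apply: irr_char.
  move=> x xG1 pdx; apply/eqP.
  have xG : x \in G by rewrite -(dprodW G1xG2) -[x]mulg1 mem_mulg.
  have := vanchi _ xG pdx; rewrite chiE // => /eqP.
  by rewrite mulf_eq0 (negPf P2).
exists (Nirr G1), (fun i => 'chi_i), sigma; split => //.
- exact: irr_inj.
- by move=> i; apply: mem_irr.
rewrite -/chi1; split => //.
have e1 := @plevel_pvan _ _ _ _ pr_p pv1.
have e2 := @plevel_pvan _ _ _ _ pr_p pvchi.
have := chiE _ (group1 G1); rewrite e2 e1.
rewrite -(dprod_card G1xG2) partnM ?cardG_gt0 // => /eqP.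
rewrite -!natrM eqr_nat.
have -> : (#|G2|`_p * (plevel p chi1 * #|G1|`_p) =
           plevel p chi1 * (#|G1|`_p * #|G2|`_p))%N.
  by rewrite mulnCA [(#|G2|`_p * _)%N]mulnC.
rewrite eqn_pmul2r; last first.
  by rewrite muln_gt0 !part_gt0.
by move=> /eqP.
Qed.
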